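(* Let $I_1,\dots,I_t\subset S$ be monomial ideals, where each $I_j$ is generated in a single degree $d_j$, $d_1\le\cdots\le d_t$, and each $I_j$ has linear quotients with respect to a fixed ordering of $\mathcal{G}(I_j)$. Suppose the following property $( * )$ holds: for all $u\in\mathcal{G}(I_i)$ and $v\in\mathcal{G}(I_j)$ with $i<j$ and $\deg(u:v)>1$, there exists a monomial $w$ belonging to $(I_1\cup\cdots\cup I_{j-1})\cup\{w\in\mathcal{G}(I_j): w \text{ precedes } v \text{ in the fixed linear quotients order of } I_j\}$ such that $\deg(w:v)=1$ and $w:v$ divides $u:v$. Then $I=I_1+\cdots+I_t$ has linear quotients.
   Context: $S=K[x_1,\dots,x_n]$. For a monomial ideal $I$, $\mathcal{G}(I)$ is its minimal monomial generating set. A monomial ideal $I$ has linear quotients if $\mathcal{G}(I)$ can be ordered $u_1,\dots,u_s$ so that for each $i=2,\dots,s$ the colon ideal $(u_1,\dots,u_{i-1}):(u_i)$ is generated by variables; such an ordering is a linear quotients order. For monomials $u,v$, $u:v=u/\gcd(u,v)$. *)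

(* Defs.v *)
From mathcomp Require Import all_boot.
Set Implicit Arguments. Unset Strict Implicit. Unset Printing Implicit Defensive.

(* Monomials of S = K[x_1,...,x_n], encoded by exponent vectors. *)
Definition mono (n : nat) := {ffun 'I_n -> nat}.

Section Monomials.
Variable n : nat.
Implicit Types u v w m : mono n.

Definition mdvd u v : bool := [forall i, u i <= v i].
Definition mdeg u : nat := \sum_(i < n) u i.
Definition mmul u v : mono n := [ffun i => u i + v i].
(* u : v = u / gcd(u, v) *)
Definition mcolon u v : mono n := [ffun i => u i - v i].
Definition mvar (l : 'I_n) : mono n := [ffun i => nat_of_bool (i == l)].

(* A monomial ideal is represented by the set of monomials it contains. *)
Definition mideal := mono n -> Prop.

Definition ideal_of (F : seq (mono n)) : mideal := fun m => has (fun g => mdvd g m) F.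

Definition mingen (I : mideal) u : Prop :=
  I u /\ forall v, I v -> mdvd v u -> v = u.

Definition is_mingens_order (I : mideal) (s : seq (mono n)) : Prop :=
  uniq s /\ forall u, u \in s <-> mingen I u.

Definition gen_by_vars (J : mideal) : Prop :=
  exists L : {set 'I_n}, forall m, J m <-> exists2 l, l \in L & 0 < m l.

(* The colon ideal (u_1,...,u_{i-1}) : (u_i), as a set of monomials. *)
Definition colon_prefix (s : seq (mono n)) (i : nat) : mideal :=
  fun m => ideal_of (take i s) (mmul m (nth [ffun => 0%N] s i)).

Definition lq_order (s : seq (mono n)) : Prop :=
  forall i, 0 < i < size s -> gen_by_vars (colon_prefix s i).

Definition has_linear_quotients (I : mideal) : Prop :=
  exists s, is_mingens_order I s /\ lq_order s.

End Monomials.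

(* Main.v *)
Require Import Defs.
From mathcomp Require Import all_boot zify.
Set Implicit Arguments. Unset Strict Implicit. Unset Printing Implicit Defensive.

Lemma mdvdP (n : nat) (u : mono n) (v : mono n) : reflect (forall i, u i <= v i) (mdvd u v).
Proof. exact: forallP. Qed.

Lemma mdvd_refl (n : nat) (u : mono n) : mdvd u u.
Proof. by apply/mdvdP. Qed.

Lemma mdvd_trans (n : nat) (u : mono n) (v : mono n) (w : mono n) : mdvd u v -> mdvd v w -> mdvd u w.
Proof. move=> /mdvdP h1 /mdvdP h2; apply/mdvdP=> i; exact: leq_trans (h1 i) (h2 i). Qed.

Lemma mdeg_le (n : nat) (u : mono n) (v : mono n) : mdvd u v -> mdeg u <= mdeg v.
Proof. by move=> /mdvdP h; apply: leq_sum => i _; apply: h. Qed.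

Lemma mdvd_eq (n : nat) (u : mono n) (v : mono n) : mdvd u v -> mdeg v <= mdeg u -> u = v.
Proof.
move=> /mdvdP h hd; apply/ffunP=> i; apply/eqP; rewrite eqn_leq h /=.
apply/negPn/negP; rewrite -ltnNge => lt.
have: mdeg u < mdeg v.
  rewrite /mdeg (bigD1 i) //= [X in _ < X](bigD1 i) //=.
  by rewrite -addSn leq_add // leq_sum // => k _; apply: h.
by rewrite ltnNge hd.
Qed.

Lemma mdvd_antisym (n : nat) (u : mono n) (v : mono n) : mdvd u v -> mdvd v u -> u = v.
Proof. by move=> h1 h2; apply: mdvd_eq h1 (mdeg_le h2). Qed.

Lemma mcolonE (n : nat) (u : mono n) (v : mono n) (i : 'I_n) : mcolon u v i = u i - v i.
Proof. by rewrite ffunE. Qed.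

Lemma mcolon_dvd (n : nat) (g : mono n) (w : mono n) (v : mono n) : mdvd g w -> mdvd (mcolon g v) (mcolon w v).
Proof. by move=> /mdvdP h; apply/mdvdP=> i; rewrite !mcolonE leq_sub2r. Qed.

Lemma mdeg0_dvd (n : nat) (u : mono n) (v : mono n) : mdeg (mcolon u v) = 0 -> mdvd u v.
Proof.
move=> /eqP; rewrite /mdeg sum_nat_eq0 => /forallP h; apply/mdvdP=> i.
by have := h i; rewrite mcolonE subn_eq0.
Qed.

Lemma mdvd_mul_colon (n : nat) (u : mono n) (m : mono n) (v : mono n) : mdvd u (mmul m v) = mdvd (mcolon u v) m.
Proof.
apply/mdvdP/mdvdP=> h i; have := h i; rewrite ?ffunE; lia.
Qed.

Lemma mdeg_pos (n : nat) (x : mono n) : 0 < mdeg x -> exists l, 0 < x l.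
Proof.
move=> h; case: (pickP (fun l => 0 < x l)) => [l hl|hn]; first by exists l.
move: h; rewrite lt0n /mdeg sum_nat_eq0; case/negP; apply/forallP=> i.
by have := hn i; rewrite lt0n => /negbFE.
Qed.

Lemma mdeg1_var (n : nat) (x : mono n) (l : 'I_n) : mdeg x = 1 -> 0 < x l -> forall i, x i <= (i == l).
Proof.
move=> h hl i; move: h; rewrite /mdeg (bigD1 l) //=.
case: (eqVneq i l) => [->|nil] /=; first lia.
rewrite (bigD1 i) //= => e.
lia.
Qed.


Definition off (T : eqType) (ss : seq (seq T)) k := sumn (take k (map size ss)).

Lemma F1 (T : eqType) (ss : seq (seq T)) k x : x \in nth [::] ss k ->
  index x (flatten ss) <= off ss k + index x (nth [::] ss k).
Proof.
elim: ss k => [|s ss IH] [|k] //=; rewrite /off /= index_cat.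
- by move=> ->.
- move=> /IH h; case: ifP => [xs|_]; last by rewrite -addnA leq_add2l.
  by have := index_mem x s; rewrite xs; lia.
Qed.

Lemma F2 (T : eqType) (ss : seq (seq T)) x : x \in flatten ss -> exists2 k, x \in nth [::] ss k &
  index x (flatten ss) = off ss k + index x (nth [::] ss k).
Proof.
elim: ss => [|s ss IH] //=; rewrite mem_cat index_cat.
case xs: (x \in s) => /=; first by move=> _; exists 0 => //; rewrite xs.
move=> /IH[k h1 h2]; exists k.+1 => //; rewrite /off /= h2 /off; lia.
Qed.

Lemma F3 (T : eqType) (ss : seq (seq T)) k k' : k < k' -> off ss k + size (nth [::] ss k) <= off ss k'.
Proof.
elim: ss k k' => [|s ss IH] k k'; first by rewrite /off /= !nth_nil.
case: k => [|k]; case: k' => [|k'] //= hk; rewrite /off /=.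
- rewrite add0n; exact: leq_addr.
- have := IH k k' hk; rewrite /off; lia.
Qed.


Lemma GL n (L : seq (mono n)) i :
  let v := nth [ffun => 0] L i in
  (forall u, u \in take i L -> exists2 g, g \in take i L &
      (mdeg (mcolon g v) == 1) && mdvd (mcolon g v) (mcolon u v)) ->
  gen_by_vars (colon_prefix L i).
Proof.
move=> v H.
exists [set l | has (fun g => (mdeg (mcolon g v) == 1) && (0 < mcolon g v l)) (take i L)].
move=> m; rewrite /colon_prefix /ideal_of -/v; split.
- case/hasP=> u uin; rewrite mdvd_mul_colon => dum.
  have [g gin /andP[/eqP g1 gdu]] := H u uin.
  have [l hl] := mdeg_pos (n:=n) (x:= mcolon g v) (ltac:(by rewrite g1)).
  exists l; first by rewrite inE; apply/hasP; exists g => //; rewrite g1 eqxx hl.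
  move/mdvdP: gdu => /(_ l) h1; move/mdvdP: dum => /(_ l) h2; lia.
- case=> l; rewrite inE => /hasP[g gin /andP[/eqP g1 gl]] ml.
  apply/hasP; exists g => //; rewrite mdvd_mul_colon; apply/mdvdP=> k.
  have := mdeg1_var g1 gl k; case: eqP => [->|_]; lia.
Qed.


Lemma mdeg_mvar n (l : 'I_n) : mdeg (mvar l) = 1.
Proof.
rewrite /mdeg (bigD1 l) //= big1 => [|i il]; rewrite ffunE ?eqxx //.
by rewrite (negbTE il).
Qed.

Lemma exist_min n t (G : 'I_t -> seq (mono n)) x :
  (exists j, ideal_of (G j) x) ->
  exists k g, [/\ g \in G k, mdvd g x &
     mingen (fun m => exists j, ideal_of (G j) m) g].
Proof.
move=> hx.
pose P dd := [exists k, has (fun g => mdvd g x && (mdeg g == dd)) (G k)].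
have exP : exists dd, P dd.
  case: hx => j /hasP[g gin gx]; exists (mdeg g); apply/existsP; exists j.
  by apply/hasP; exists g => //; rewrite gx eqxx.
case: (ex_minnP exP) => dd /existsP[k /hasP[g gin /andP[gx /eqP gd]]] hmin.
exists k, g; split => //; split; first by exists k; apply/hasP; exists g => //; apply: mdvd_refl.
move=> v [k' /hasP[h hin hv]] vg.
have hg := mdvd_trans hv vg.
have : dd <= mdeg h.
  apply: hmin; apply/existsP; exists k'; apply/hasP; exists h => //.
  by rewrite (mdvd_trans hg gx) eqxx.
move=> le; have := mdvd_eq hg; rewrite gd => /(_ le) ehg.
apply: mdvd_eq vg _; rewrite -ehg; exact: mdeg_le hv.
Qed.


Theorem lemma3p1 (n t : nat) (G : 'I_t -> seq (mono n)) (d : 'I_t -> nat) :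
  (forall j, is_mingens_order (ideal_of (G j)) (G j)) ->
  (forall j u, u \in G j -> mdeg u = d j) ->
  (forall i j : 'I_t, (i <= j)%N -> (d i <= d j)%N) ->
  (forall j, lq_order (G j)) ->
  (forall (i j : 'I_t) (u v : mono n), (i < j)%N -> u \in G i -> v \in G j ->
     (1 < mdeg (mcolon u v))%N ->
     exists w : mono n,
       ((exists2 k : 'I_t, (k < j)%N & ideal_of (G k) w) \/
        (w \in G j /\ (index w (G j) < index v (G j))%N)) /\
       mdeg (mcolon w v) = 1%N /\ mdvd (mcolon w v) (mcolon u v)) ->
  has_linear_quotients (fun m => exists j : 'I_t, ideal_of (G j) m).
Proof.
move=> hmg hdeg hmono hlq hstar.
set I := fun m => exists j : 'I_t, ideal_of (G j) m.
pose ss := map G (enum 'I_t).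
pose flat := flatten ss.
have nthG : forall j : 'I_t, nth [::] ss j = G j.
  by move=> j; rewrite /ss (nth_map j) ?size_enum_ord // nth_ord_enum.
have nthbig : forall k, nth [::] ss k != [::] -> k < t.
  move=> k; rewrite ltnNge; apply: contra => hk.
  by rewrite nth_default // /ss size_map size_enum_ord.
pose key x := index x flat.
pose Pb x := [forall j, all (fun g => mdvd g x ==> (g == x)) (G j)].
pose L := sort (fun a b => key a <= key b) (filter Pb (undup flat)).
have inflat : forall x, (x \in flat) <-> exists j, x \in G j.
  move=> x; split.
  - case/flattenP=> s /mapP[j _ ->] xs; by exists j.
  - case=> j xj; apply/flattenP; exists (G j) => //; apply/mapP; exists j => //.
    by rewrite mem_enum.
have hGmin : forall j u w, u \in G j -> w \in G j -> mdvd w u -> w = u.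
  move=> j u w uj wj wu; have [_ /(_ u) [/(_ uj) [_ h] _]] := hmg j.
  by apply: h => //; apply/hasP; exists w => //; apply: mdvd_refl.
have mingen_Pb : forall x, mingen I x -> Pb x.
  move=> x [_ h]; apply/forallP=> j; apply/allP=> g gj; apply/implyP=> gx.
  apply/eqP; apply: h gx; exists j; apply/hasP; exists g => //; apply: mdvd_refl.
have Pb_mingen : forall x, x \in flat -> Pb x -> mingen I x.
  move=> x /inflat[j xj] /forallP hP; split.
    by exists j; apply/hasP; exists x => //; apply: mdvd_refl.
  move=> v [k /hasP[h hk hv]] vx.
  have hx := mdvd_trans hv vx.
  have /eqP ehx := implyP (allP (hP k) h hk) hx.
  by apply: mdvd_antisym vx _; rewrite -ehx.
have memL : forall x, (x \in L) = Pb x && (x \in flat).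
  by move=> x; rewrite mem_sort mem_filter mem_undup.
have uniqL : uniq L by rewrite sort_uniq filter_uniq // undup_uniq.
have sortedL : sorted ltn (map key L).
  rewrite ltn_sorted_uniq_leq; apply/andP; split.
    rewrite map_inj_in_uniq // => x y; rewrite !memL => /andP[_ xf] /andP[_ yf].
    exact: index_inj.
  rewrite sorted_map; apply: sort_sorted => a b; exact: leq_total.
have takeL : forall i u, i < size L -> u \in L ->
    (u \in take i L) = (key u < key (nth [ffun => 0] L i)).
  move=> i u iL uL; rewrite in_take //.
  have hs := sorted_ltn_nth ltn_trans 0 sortedL.
  have pL : index u L < size L by rewrite index_mem.
  have eu : key u = nth 0 (map key L) (index u L) by rewrite (nth_map u) // nth_index.
  have ev : key (nth [ffun => 0] L i) = nth 0 (map key L) i by rewrite (nth_map [ffun => 0]).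
  rewrite eu ev; case: (ltngtP (index u L) i) => h.
  - by rewrite hs // inE size_map.
  - apply/esym/negbTE; rewrite -leqNgt ltnW // hs // inE size_map //.
  - by rewrite h ltnn.
pose o (k : nat) := off ss k.
have F1' : forall (k : 'I_t) x, x \in G k -> key x <= o k + index x (G k).
  by move=> k x; rewrite -nthG; exact: F1.
have F3' : forall k k' : 'I_t, k < k' -> o k + size (G k) <= o k'.
  by move=> k k' kk; rewrite -nthG; exact: F3.
have lt_off : forall (k j : 'I_t) x, k < j -> x \in G k -> o k + index x (G k) < o j.
  move=> k j x kj xk; apply: leq_trans (F3' k j kj); by rewrite ltn_add2l index_mem.
have ordblock : forall x, x \in flat -> exists2 k : 'I_t, x \in G k & key x = o k + index x (G k).
  move=> x xf; case: (F2 xf) => k xk ek.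
  have kt : k < t by apply: nthbig; apply/eqP=> e; rewrite e in xk.
  have e := nthG (Ordinal kt); simpl in e.
  by exists (Ordinal kt); rewrite -e.
exists L; split.
  split => // u; split.
    by rewrite memL => /andP[hP hf]; exact: Pb_mingen.
  move=> hm; rewrite memL mingen_Pb //=; case: (hm) => [[j /hasP[g gj gu]] h].
  have Ig : I g by exists j; apply/hasP; exists g => //; apply: mdvd_refl.
  have eg := h g Ig gu.
  by apply/inflat; exists j; rewrite -eg.
move=> i /andP[i0 iL]; apply: GL => u uin.
set v := nth [ffun => 0] L i.
have vL : v \in L := mem_nth _ iL.
have uL : u \in L := mem_take uin.
have kuv : key u < key v by rewrite -takeL.
have mv : mingen I v by move: vL; rewrite memL => /andP[hP hf]; exact: Pb_mingen.
have mu : mingen I u by move: uL; rewrite memL => /andP[hP hf]; exact: Pb_mingen.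
have ndv : forall g, mingen I g -> key g < key v -> 0 < mdeg (mcolon g v).
  move=> g mg kg; rewrite lt0n; apply/eqP => /mdeg0_dvd gv.
  have eg := mv.2 g mg.1 gv; by rewrite eg ltnn in kg.
have [j vj ekv] : exists2 j : 'I_t, v \in G j & key v = o j + index v (G j).
  by apply: ordblock; move: vL; rewrite memL => /andP[].
have LA : forall w, ((exists2 k : 'I_t, k < j & ideal_of (G k) w) \/
    (w \in G j /\ index w (G j) < index v (G j))) -> mdeg (mcolon w v) = 1 ->
    exists2 g, g \in take i L &
      (mdeg (mcolon g v) == 1) && mdvd (mcolon g v) (mcolon w v).
  move=> w hw w1.
  have [k [g0 [g0k g0w early]]] : exists k g0,
      [/\ g0 \in G k, mdvd g0 w & o k + index g0 (G k) < key v].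
    case: hw => [[k kj /hasP[g0 g0k g0w]]|[wj wv]].
      exists k, g0; split => //; rewrite ekv.
      exact: leq_trans (lt_off _ _ _ kj g0k) (leq_addr _ _).
    by exists j, w; split => //; [apply: mdvd_refl | lia].
  have [k' [g [gk' gg0 mg]]] : exists k g, [/\ g \in G k, mdvd g g0 & mingen I g].
    apply: exist_min; exists k; apply/hasP; exists g0 => //; exact: mdvd_refl.
  have kg : key g < key v.
    case: (eqVneq g g0) => [->|ne]; first by apply: leq_ltn_trans (F1' _ _ g0k) early.
    have ltd : mdeg g < mdeg g0.
      rewrite ltn_neqAle mdeg_le // andbT; apply/eqP=> e; case/eqP: ne.
      by apply: mdvd_eq gg0 _; rewrite e.
    rewrite (hdeg _ _ gk') (hdeg _ _ g0k) in ltd.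
    have kk : k' < k by rewrite ltnNge; apply/negP => /hmono h2; rewrite leqNgt ltd in h2.
    apply: leq_ltn_trans (F1' _ _ gk') _.
    apply: leq_ltn_trans _ early; exact: leq_trans (ltnW (lt_off _ _ _ kk gk')) (leq_addr _ _).
  exists g.
    rewrite takeL // memL mingen_Pb //=; apply/inflat; by exists k'.
  have dv : mdvd (mcolon g v) (mcolon w v) := mcolon_dvd v (mdvd_trans gg0 g0w).
  rewrite dv andbT; have h1 := mdeg_le dv; rewrite w1 in h1.
  by rewrite eqn_leq h1 ndv.
have [i1 ui1 eku] : exists2 k : 'I_t, u \in G k & key u = o k + index u (G k).
  by apply: ordblock; move: uL; rewrite memL => /andP[].
case: (ltngtP i1 j) => h.
- case: (leqP (mdeg (mcolon u v)) 1) => hd.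
    exists u => //; rewrite mdvd_refl andbT; have := ndv u mu kuv; lia.
  have [w [hw [w1 wdv]]] := hstar _ _ _ _ h ui1 vj hd.
  have [g gin /andP[g1 gdv]] := LA w hw w1.
  by exists g => //; rewrite g1 /=; exact: mdvd_trans gdv wdv.
- have := lt_off _ _ _ h vj; rewrite -ekv; have := leq_addr (index u (G i1)) (o i1).
  rewrite -eku; lia.
- have ej : i1 = j by apply: val_inj.
  subst i1.
  set p := index v (G j).
  have up : index u (G j) < p by rewrite /p; lia.
  have pv : 0 < p < size (G j) by rewrite index_mem vj andbT; lia.
  have [Ls hLs] := hlq j p pv.
  have ncol : colon_prefix (G j) p (mcolon u v).
    rewrite /colon_prefix nth_index //; apply/hasP; exists u.
      by rewrite in_take.
    by rewrite mdvd_mul_colon mdvd_refl.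
  have [l lLs ul] := (hLs _).1 ncol.
  have : colon_prefix (G j) p (mvar l) by apply (hLs _).2; exists l => //; rewrite ffunE eqxx.
  rewrite /colon_prefix nth_index // => /hasP[w win]; rewrite mdvd_mul_colon => wdv.
  have wj : w \in G j := mem_take win.
  have wp : index w (G j) < p by rewrite -in_take.
  have wne : 0 < mdeg (mcolon w v).
    rewrite lt0n; apply/eqP=> /mdeg0_dvd wv.
    have ew := hGmin j v w vj wj wv; by rewrite ew ltnn in wp.
  have w1 : mdeg (mcolon w v) = 1.
    have h1 := mdeg_le wdv; rewrite mdeg_mvar in h1.
    by apply/eqP; rewrite eqn_leq h1 wne.
  have [g gin /andP[g1 gdv]] := LA w (or_intror (conj wj wp)) w1.
  exists g => //; rewrite g1 /=; apply: mdvd_trans gdv _.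
  apply/mdvdP=> k; have hk := (mdvdP _ _ wdv) k; rewrite !mcolonE in hk *.
  rewrite /mvar ffunE in hk; rewrite mcolonE in ul.
  case: (eqVneq k l) hk => [->|kl] hk.
    by move: hk; rewrite ?eqxx => hk; exact: leq_trans hk ul.
  exact: leq_trans hk (leq0n _).
Qed.
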